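(* Let $\varphi=\frac{1+\sqrt5}{2}$ and for every integer $m$ let $F_m=\frac{\varphi^m-(-1/\varphi)^m}{\varphi+1/\varphi}$; let $F_0!=1$, $F_n!=F_1\cdots F_n$. For a real constant $a$ define the Golden polynomials $P_0(x)=1$ and, for $n\ge1$, $$P_n(x)=\frac{(x-a)_F^n}{F_n!},\qquad (x-a)_F^n=\prod_{k=0}^{n-1}\big(x-(-1)^k\varphi^{\,n-1-2k}a\big).$$ Then $D_FP_n=P_{n-1}$ for $n\ge1$ (where $D_F$ is the linear operator on polynomials in $x$ with $D_Fx^m=F_mx^{m-1}$, $D_F1=0$), and for every $n\ge1$, respectively $n\ge0$, $$P_{2n}(x)=\frac1{F_{2n}!}\prod_{k=1}^n\Big(x^2-(-1)^{n+k}(F_{2k-1}+2F_{2k-2})xa-a^2\Big),$$ $$P_{2n+1}(x)=\frac{x-(-1)^na}{F_{2n+1}!}\prod_{k=1}^n\Big(x^2-(-1)^{n+k}(F_{2k}+2F_{2k-1})xa+a^2\Big).$$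
   Context: Empty products equal $1$. *)

(* Defs.v *)
From HB Require Import structures.
From mathcomp Require Import all_boot all_order all_algebra.
Set Implicit Arguments. Unset Strict Implicit. Unset Printing Implicit Defensive.
Import Order.TTheory GRing.Theory Num.Theory.
Local Open Scope ring_scope.

Section Golden.
Variable R : rcfType.

Definition phi : R := (1 + Num.sqrt 5) / 2.

Definition Fib (m : nat) : R :=
  (phi ^+ m - (- phi^-1) ^+ m) / (phi + phi^-1).

Definition Ffact (n : nat) : R := \prod_(1 <= i < n.+1) Fib i.

Definition golden_binom (a : R) (n : nat) : {poly R} :=
  \prod_(k < n)
     ('X - ((-1) ^+ k * phi ^ ((n.-1)%:Z - (2 * k)%:Z) * a)%:P).

Definition Pgold (a : R) (n : nat) : {poly R} :=
  (Ffact n)^-1 *: golden_binom a n.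

Definition DF (p : {poly R}) : {poly R} :=
  \poly_(i < (size p).-1) (Fib i.+1 * p`_i.+1).

End Golden.

(* Main.v *)
Require Import Defs.
From HB Require Import structures.
From mathcomp Require Import all_boot all_order all_algebra.
From mathcomp Require Import ring lra zify.
Import Order.TTheory GRing.Theory Num.Theory.
Local Open Scope ring_scope.

Section S.
Variable R : rcfType.
Local Notation phi := (phi R).
Let psi : R := 1 - phi.

Lemma phi_sq : phi ^+ 2 = phi + 1.
Proof.
have h := @sqr_sqrtr R 5 ltac:(by []).
rewrite /Defs.phi; set s := Num.sqrt 5 in h *.
rewrite expr2; field: h; lra.
Qed.

Lemma phi_bounds : 1 < phi < 2.
Proof.
have h := @sqr_sqrtr R 5 ltac:(by []).
have h0 : 0 <= Num.sqrt (5:R) := sqrtr_ge0 _.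
rewrite /Defs.phi; set s := Num.sqrt 5 in h h0 *.
have h1 : 1 < s by nra.
have h2 : s < 3 by nra.
apply/andP; split; lra.
Qed.

Lemma phi_neq0 : phi != 0.
Proof. case/andP: phi_bounds => h _; rewrite gt_eqF //; lra. Qed.

Lemma phiV : phi^-1 = phi - 1.
Proof.
have h := phi_sq; have hn := phi_neq0.
apply: (mulfI hn); rewrite mulfV //; rewrite expr2 in h; ring: h.
Qed.

Lemma psiE : - phi^-1 = psi.
Proof. rewrite phiV /psi; ring. Qed.

Lemma phipsi : phi * psi = -1.
Proof. have h := phi_sq; rewrite /psi; ring: h. Qed.

Lemma c_neq0 : phi + phi^-1 != 0.
Proof. rewrite phiV; case/andP: phi_bounds => h _; rewrite gt_eqF //; lra. Qed.

Lemma FibE m : Fib R m = (phi ^+ m - psi ^+ m) / (phi + phi^-1).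
Proof. by rewrite /Fib psiE. Qed.

Lemma Fib_neq0 m : (0 < m)%N -> Fib R m != 0.
Proof.
move=> hm; rewrite FibE mulf_eq0 invr_eq0 negb_or c_neq0 andbT subr_eq0.
case/andP: phi_bounds => h1 h2.
have A : 1 < phi ^+ m by rewrite exprn_egt1 // -lt0n.
have B : `|psi| ^+ m <= 1 by apply: exprn_ile1 => //; rewrite /psi ler_norml; apply/andP; split; lra.
have C : psi ^+ m <= `|psi ^+ m| := ler_norm _.
rewrite normrX in C.
rewrite gt_eqF //; lra.
Qed.

Lemma Lucas j : Fib R j.+1 + 2 * Fib R j = phi ^+ j.+1 + psi ^+ j.+1.
Proof.
rewrite !FibE.
have hc := c_neq0; rewrite phiV in hc.
rewrite phiV /psi !exprS.
have h := phi_sq; rewrite expr2 in h.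
set x := phi ^+ j; set y := (1 - phi) ^+ j.
field: h; exact: hc.
Qed.


Lemma gbE (a : R) n : golden_binom a n =
  \prod_(k < n) ('X - (phi ^+ (n.-1 - k) * psi ^+ k * a)%:P).
Proof.
apply: eq_bigr => k _; congr (_ - _%:P); congr (_ * a).
have hk : (k <= n.-1)%N by case: k => k /= hk; lia.
have -> : (n.-1)%:Z - (2 * k)%:Z = (n.-1 - k)%:Z + (- (k%:Z)) by lia.
rewrite expfzDr ?phi_neq0 // -exprnN -psiE -mulN1r exprMn -exprVn.
rewrite mulrCA; congr (_ * _).
by rewrite expr1n mulr1 -exprMn mulN1r.
Qed.


Lemma compZX (c : R) (p : {poly R}) :
  p \Po (c *: 'X) = \poly_(i < size p) (c ^+ i * p`_i).
Proof.
rewrite comp_polyE poly_def; apply: eq_bigr => i _.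
by rewrite exprZn scalerA mulrC.
Qed.

Lemma Fib0 : Fib R 0 = 0.
Proof. by rewrite /Fib !expr0 subrr mul0r. Qed.

Lemma XDF (p : {poly R}) : 'X * DF p = \poly_(i < size p) (Fib R i * p`_i).
Proof.
apply/polyP => i; rewrite coefXM !coef_poly /=.
case: i => [|j] /=; first by rewrite Fib0 mul0r; case: ifP.
by case: (size p) => [|m] //=.
Qed.

Lemma DF_char (p : {poly R}) :
  (phi + phi^-1) *: ('X * DF p) = (p \Po (phi *: 'X)) - (p \Po (psi *: 'X)).
Proof.
rewrite XDF !compZX; apply/polyP => i; rewrite coefZ coefB !coef_poly.
case: ifP => _; rewrite ?mulr0 ?subr0 // FibE.
have hc := c_neq0.
field; rewrite phi_neq0 /=; case/andP: phi_bounds => h1 _; rewrite gt_eqF //; nra.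
Qed.


Definition Gp (a : R) n : {poly R} :=
  \prod_(k < n) ('X - (phi ^+ (n.-1 - k) * psi ^+ k * a)%:P).

Lemma comp_prod (q : {poly R}) n (F : 'I_n -> {poly R}) :
  (\prod_(k < n) F k) \Po q = \prod_(k < n) (F k \Po q).
Proof.
exact: (big_morph (comp_poly q) (fst (comp_poly_multiplicative q)) (snd (comp_poly_multiplicative q))).
Qed.

Lemma Gphi a m : Gp a m.+1 \Po (phi *: 'X) =
  phi ^+ m.+1 *: (Gp a m * ('X + (psi ^+ m.+1 * a)%:P)).
Proof.
rewrite /Gp comp_prod big_ord_recr /=.
have E : forall k : 'I_m, ('X - (phi ^+ (m - widen_ord (leqnSn m) k) * psi ^+ widen_ord (leqnSn m) k * a)%:P) \Po (phi *: 'X)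
   = phi *: ('X - (phi ^+ (m.-1 - k) * psi ^+ k * a)%:P).
  move=> k; rewrite comp_polyB comp_polyX comp_polyC /= scalerBr -!mul_polyC -polyCM.
  have -> : (m - k = (m.-1 - k).+1)%N by case: k => k /= hk; lia.
  by rewrite exprS !mulrA.
rewrite (eq_bigr _ (fun k _ => E k)) scaler_prodl card_ord.
rewrite comp_polyB comp_polyX comp_polyC /= subnn expr0 mul1r.
have -> : phi *: 'X - (psi ^+ m * a)%:P = phi *: ('X + (psi ^+ m.+1 * a)%:P).
  rewrite scalerDr; congr (_ + _); rewrite -mul_polyC -polyCM -polyCN; congr _%:P.
  have h := phipsi; rewrite exprS; ring: h.
by rewrite -scalerAl -scalerAr scalerA -exprSr.
Qed.

Lemma Gpsi a m : Gp a m.+1 \Po (psi *: 'X) =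
  psi ^+ m.+1 *: (('X + (phi ^+ m.+1 * a)%:P) * Gp a m).
Proof.
rewrite /Gp comp_prod big_ord_recl /=.
have E : forall k : 'I_m, ('X - (phi ^+ (m - lift ord0 k) * psi ^+ lift ord0 k * a)%:P) \Po (psi *: 'X)
   = psi *: ('X - (phi ^+ (m.-1 - k) * psi ^+ k * a)%:P).
  move=> k; rewrite comp_polyB comp_polyX comp_polyC /= scalerBr -!mul_polyC -polyCM.
  rewrite /bump /= add1n.
  have -> : (m - k.+1 = m.-1 - k)%N by case: k => k /= hk; lia.
  by rewrite exprS mulrCA !mulrA.
rewrite (eq_bigr _ (fun k _ => E k)) scaler_prodl card_ord.
rewrite comp_polyB comp_polyX comp_polyC /= subn0 expr0 mulr1.
have -> : psi *: 'X - (phi ^+ m * a)%:P = psi *: ('X + (phi ^+ m.+1 * a)%:P).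
  rewrite scalerDr; congr (_ + _); rewrite -mul_polyC -polyCM -polyCN; congr _%:P.
  have h := phipsi; rewrite exprS; ring: h.
by rewrite -scalerAr -scalerAl scalerA -exprSr.
Qed.

Lemma DF_G a m : (phi + phi^-1) *: ('X * DF (Gp a m.+1)) =
   (phi ^+ m.+1 - psi ^+ m.+1) *: ('X * Gp a m).
Proof.
rewrite DF_char Gphi Gpsi -!mul_polyC !polyCM polyCB.
set A := (phi ^+ m.+1)%:P; set B := (psi ^+ m.+1)%:P.
ring.
Qed.


Lemma coefDF (p : {poly R}) i : (DF p)`_i = Fib R i.+1 * p`_i.+1.
Proof.
rewrite /DF coef_poly; case: ifP => // h.
rewrite nth_default ?mulr0 //; move/negbT: h; rewrite -leqNgt; case: (size p) => //= k; lia.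
Qed.

Lemma DFZ (c : R) p : DF (c *: p) = c *: DF p.
Proof. by apply/polyP => i; rewrite coefZ !coefDF coefZ mulrCA. Qed.

Lemma FfactS m : Ffact R m.+1 = Ffact R m * Fib R m.+1.
Proof. by rewrite /Ffact big_nat_recr. Qed.

Lemma part1 (a : R) n : (1 <= n)%N -> DF (Pgold a n) = Pgold a n.-1.
Proof.
case: n => [//|m] _ /=.
rewrite /Pgold !gbE -/(Gp a m.+1) -/(Gp a m) DFZ.
have hc := c_neq0; have hX : ('X : {poly R}) != 0 by rewrite polyX_eq0.
apply: (scalerI hc); apply: (mulfI hX).
rewrite (scalerA _ (Ffact R m.+1)^-1) [(phi + phi^-1) * _]mulrC -scalerA -!scalerAr DF_G.
rewrite !scalerA; congr (_ *: _).
have hF : Fib R m.+1 != 0 by apply: Fib_neq0.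
have -> : phi ^+ m.+1 - psi ^+ m.+1 = Fib R m.+1 * (phi + phi^-1) by rewrite FibE divfK.
rewrite FfactS invfM mulrA -(mulrA _ _ (Fib R _)) mulVf // mulr1 mulrC.
by [].
Qed.


Lemma prod_even (F : nat -> {poly R}) m :
  \prod_(k < 2 * m) F k = \prod_(1 <= j < m.+1) (F (m - j)%N * F (m - 1 + j)%N).
Proof.
elim: m F => [|m IH] F; first by rewrite muln0 big_ord0 big_geq.
have -> : (2 * m.+1 = (2 * m).+2)%N by lia.
rewrite big_ord_recr big_ord_recl /= (IH (fun k => F k.+1)) [RHS]big_nat_recr //=.
rewrite (@eq_big_nat _ _ _ 1 m.+1 (fun i => F (m - i).+1 * F (m - 1 + i).+1) (fun j => F (m.+1 - j)%N * F (m.+1 - 1 + j)%N)); last first.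
  move=> j /andP [h1 h2]; congr (F _ * F _); lia.
rewrite subnn /bump /=.
have -> : (m.+1 - 1 + m.+1 = (2 * m).+1)%N by lia.
ring.
Qed.

Lemma prod_odd (F : nat -> {poly R}) m :
  \prod_(k < (2 * m).+1) F k = F m * \prod_(1 <= j < m.+1) (F (m - j)%N * F (m + j)%N).
Proof.
elim: m F => [|m IH] F; first by rewrite muln0 big_ord_recl big_ord0 big_geq // !mulr1.
have -> : ((2 * m.+1).+1 = ((2 * m).+1).+2)%N by lia.
rewrite big_ord_recr big_ord_recl /= (IH (fun k => F k.+1)) [X in _ = _ * X]big_nat_recr //=.
rewrite (@eq_big_nat _ _ _ 1 m.+1 (fun i => F (m - i).+1 * F (m + i).+1) (fun j => F (m.+1 - j)%N * F (m.+1 + j)%N)); last first.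
  move=> j /andP [h1 h2]; congr (F _ * F _); lia.
rewrite subnn /bump /=.
have -> : (m.+1 + m.+1 = ((2 * m).+1).+1)%N by lia.
ring.
Qed.


Lemma pairE (a : R) i e :
  ('X - (phi ^+ (i + e) * psi ^+ i * a)%:P) * ('X - (phi ^+ i * psi ^+ (i + e) * a)%:P)
  = 'X^2 - ((-1) ^+ i * (phi ^+ e + psi ^+ e) * a) *: 'X + ((-1) ^+ e * a ^+ 2)%:P.
Proof.
have pp : forall k, phi ^+ k * psi ^+ k = (-1) ^+ k by move=> k; rewrite -exprMn phipsi.
have -> : phi ^+ (i + e) * psi ^+ i = (-1) ^+ i * phi ^+ e by rewrite exprD mulrAC pp mulrC.
have -> : phi ^+ i * psi ^+ (i + e) = (-1) ^+ i * psi ^+ e by rewrite exprD mulrA pp.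
have hs : (-1) ^+ i * (-1) ^+ i = 1 :> R by rewrite -exprMn mulrNN mulr1 expr1n.
have huv := pp e.
set s := (-1) ^+ i in hs *; set u := phi ^+ e in huv *; set v := psi ^+ e in huv *.
have -> : (-1) ^+ e * a ^+ 2 = (s * u * a) * (s * v * a) by rewrite -huv; ring: hs.
rewrite -mul_polyC !polyCM polyCD; ring.
Qed.


Lemma m1even k : (-1) ^+ (2 * k) = 1 :> R.
Proof. by rewrite exprM expr2 mulrNN mulr1 expr1n. Qed.

Lemma sign_sub n j : (j <= n)%N -> (-1) ^+ (n - j) = (-1) ^+ (n + j) :> R.
Proof.
move=> h; have -> : (n + j = (n - j) + 2 * j)%N by lia.
by rewrite exprD m1even mulr1.
Qed.

Lemma part2 (a : R) n : (1 <= n)%N ->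
     Pgold a (2 * n) =
     (Ffact R (2 * n))^-1 *:
       \prod_(1 <= k < n.+1)
         ('X^2 - ((-1) ^+ (n + k) * (Fib R (2 * k - 1) + 2 * Fib R (2 * k - 2)) * a) *: 'X
               - (a ^+ 2)%:P).
Proof.
move=> _; rewrite /Pgold gbE; congr (_ *: _).
rewrite (prod_even (fun k => 'X - (phi ^+ ((2 * n).-1 - k) * psi ^+ k * a)%:P)).
apply: eq_big_nat => j /andP [h1 h2].
have -> : ((2 * n).-1 - (n - j) = (n - j) + (2 * j - 1))%N by lia.
have -> : ((2 * n).-1 - (n - 1 + j) = n - j)%N by lia.
have -> : (n - 1 + j = (n - j) + (2 * j - 1))%N by lia.
rewrite pairE sign_sub; last by lia.
have -> : (2 * j - 1 = (2 * j - 2).+1)%N by lia.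
rewrite -Lucas.
have -> : (-1) ^+ (2 * j - 2).+1 = -1 :> R.
  have -> : (2 * j - 2 = 2 * (j - 1))%N by lia.
  by rewrite exprS m1even mulr1.
by rewrite mulN1r polyCN.
Qed.

Lemma part3 (a : R) n :
     Pgold a (2 * n + 1) =
     (Ffact R (2 * n + 1))^-1 *:
       (('X - ((-1) ^+ n * a)%:P) *
        \prod_(1 <= k < n.+1)
          ('X^2 - ((-1) ^+ (n + k) * (Fib R (2 * k) + 2 * Fib R (2 * k - 1)) * a) *: 'X
                + (a ^+ 2)%:P)).
Proof.
rewrite /Pgold gbE addn1; congr (_ *: _).
rewrite (prod_odd (fun k => 'X - (phi ^+ ((2 * n).+1.-1 - k) * psi ^+ k * a)%:P)) /=.
congr (_ * _).
  have -> : (2 * n - n = n)%N by lia.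
  by rewrite -exprMn phipsi.
apply: eq_big_nat => j /andP [h1 h2].
have -> : (2 * n - (n - j) = (n - j) + (2 * j))%N by lia.
have -> : (2 * n - (n + j) = n - j)%N by lia.
have -> : (n + j = (n - j) + (2 * j))%N by lia.
rewrite pairE sign_sub; last by lia.
have -> : (2 * j = (2 * j - 1).+1)%N by lia.
rewrite -Lucas.
have -> : (-1) ^+ (2 * j - 1).+1 = 1 :> R.
  have -> : ((2 * j - 1).+1 = 2 * j)%N by lia.
  by rewrite m1even.
have -> : (n - j + (2 * j - 1).+1 = n + j)%N by lia.
have -> : ((2 * j - 1).+1 - 1 = 2 * j - 1)%N by lia.
by rewrite mul1r.
Qed.

End S.

Theorem mainTheorem12 (R : rcfType) (a : R) :
  (forall n : nat, (1 <= n)%N -> DF (Pgold a n) = Pgold a n.-1) /\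
  (forall n : nat, (1 <= n)%N ->
     Pgold a (2 * n) =
     (Ffact R (2 * n))^-1 *:
       \prod_(1 <= k < n.+1)
         ('X^2 - ((-1) ^+ (n + k) * (Fib R (2 * k - 1) + 2 * Fib R (2 * k - 2)) * a) *: 'X
               - (a ^+ 2)%:P)) /\
  (forall n : nat,
     Pgold a (2 * n + 1) =
     (Ffact R (2 * n + 1))^-1 *:
       (('X - ((-1) ^+ n * a)%:P) *
        \prod_(1 <= k < n.+1)
          ('X^2 - ((-1) ^+ (n + k) * (Fib R (2 * k) + 2 * Fib R (2 * k - 1)) * a) *: 'X
                + (a ^+ 2)%:P))).
Proof.
split; first exact: part1.
split; first exact: part2.
exact: part3.
Qed.
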